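(* Let $X$ be a transient random walk on $\mathbf{Z}^d$ and $U(A):=\sum_{x\in A\cap\mathbf{Z}^d}g(0,x)$. Then $$\gamma_c=\limsup_{n\to\infty}n^{-1}\log_2U(\mathcal{V}_n),$$ where $\gamma_c:=\inf\{\gamma\in(0,d):\sum_{x\in\mathbf{Z}^d\setminus\{0\}}g(0,x)\|x\|^{-\gamma}<\infty\}$ with $\inf\varnothing:=d$.
   Context: A random walk on $\mathbf{Z}^d$ is $X_n=X_0+\xi_1+\cdots+\xi_n$ with $\xi_1,\xi_2,\dots$ i.i.d. $\mathbf{Z}^d$-valued; $P^a$ denotes its law when $X_0=a$. Its Green function is $g(a,x):=\sum_{n\ge0}P^a\{X_n=x\}$, and transience means $g$ is finite. For $k\ge0$, $\mathcal{V}_k:=[-2^k,2^k)^d$. $\|\cdot\|$ is the Euclidean norm. *)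

(* Defs.v *)
From Stdlib Require Import Reals Lra ZArith List Classical ClassicalEpsilon.
Open Scope R_scope.

(* Points of Z^d are lists of integers of length d. *)
Definition pt (d : nat) (x : list Z) : Prop := length x = d.
Definition zero (d : nat) : list Z := repeat 0%Z d.
Definition zsub (x y : list Z) : list Z :=
  map (fun p => (fst p - snd p)%Z) (combine x y).
Definition enorm (x : list Z) : R :=
  sqrt (fold_right (fun z acc => IZR z * IZR z + acc) 0 x).

(* Sums of nonnegative families over (countable) sets: supremum of finite sums. *)
Definition finsum {T : Type} (f : T -> R) (l : list T) : R :=
  fold_right (fun x acc => f x + acc) 0 l.
Definition fin_sums {T : Type} (S : T -> Prop) (f : T -> R) (r : R) : Prop :=
  exists l, NoDup l /\ (forall x, In x l -> S x) /\ r = finsum f l.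
Definition has_sum {T : Type} (S : T -> Prop) (f : T -> R) (s : R) : Prop :=
  is_lub (fin_sums S f) s.
Definition finite_sum {T : Type} (S : T -> Prop) (f : T -> R) : Prop :=
  exists s, has_sum S f s.
(* value of the sum (meaningful when finite) *)
Definition tsum {T : Type} (S : T -> Prop) (f : T -> R) : R :=
  epsilon (inhabits 0) (has_sum S f).

Definition is_glb (E : R -> Prop) (m : R) : Prop :=
  (forall x, E x -> m <= x) /\ (forall b, (forall x, E x -> b <= x) -> b <= m).
Definition Rsup (E : R -> Prop) : R := epsilon (inhabits 0) (is_lub E).
Definition Rinf (E : R -> Prop) : R := epsilon (inhabits 0) (is_glb E).

(* limsup u = inf_n sup_{k >= n} u k  (for bounded real sequences) *)
Definition limsup (u : nat -> R) : R :=
  Rinf (fun r => exists n, r = Rsup (fun v => exists k, (n <= k)%nat /\ v = u k)).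

Definition step_dist (d : nat) (mu : list Z -> R) : Prop :=
  (forall x, 0 <= mu x) /\ (forall x, ~ pt d x -> mu x = 0) /\ has_sum (pt d) mu 1.

(* law d mu n x = P^0 { X_n = x } *)
Fixpoint law (d : nat) (mu : list Z -> R) (n : nat) (x : list Z) : R :=
  match n with
  | O => if list_eq_dec Z.eq_dec x (zero d) then 1 else 0
  | S m => tsum (pt d) (fun y => law d mu m y * mu (zsub x y))
  end.

Definition green (d : nat) (mu : list Z -> R) (x : list Z) : R :=
  tsum (fun _ : nat => True) (fun n => law d mu n x).

Definition transient (d : nat) (mu : list Z -> R) : Prop :=
  forall x, pt d x -> finite_sum (fun _ : nat => True) (fun n => law d mu n x).

Definition V (d k : nat) (x : list Z) : Prop :=
  pt d x /\ Forall (fun z => (- 2 ^ Z.of_nat k <= z < 2 ^ Z.of_nat k)%Z) x.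

Definition U (d : nat) (mu : list Z -> R) (A : list Z -> Prop) : R :=
  tsum A (green d mu).

Definition gamma_set (d : nat) (mu : list Z -> R) (g : R) : Prop :=
  0 < g < INR d /\
  finite_sum (fun x => pt d x /\ x <> zero d)
             (fun x => green d mu x * Rpower (enorm x) (- g)).

Definition gamma_c (d : nat) (mu : list Z -> R) : R :=
  match excluded_middle_informative (exists g, gamma_set d mu g) with
  | left _ => Rinf (gamma_set d mu)
  | right _ => INR d
  end.

Definition log2 (r : R) : R := ln r / ln 2.

(* Main.v *)
Require Import Defs.
From Stdlib Require Import Reals ZArith List.
From Stdlib Require Import Lra Lia Classical ClassicalEpsilon FunctionalExtensionality.
Open Scope R_scope.

Lemma finsum_nil {T} (f : T -> R) : finsum f nil = 0.
Proof. reflexivity. Qed.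
Lemma finsum_cons {T} (f : T -> R) a l : finsum f (a :: l) = f a + finsum f l.
Proof. reflexivity. Qed.
Lemma finsum_app {T} (f : T -> R) l1 l2 : finsum f (l1 ++ l2) = finsum f l1 + finsum f l2.
Proof. induction l1; simpl; [lra|rewrite IHl1; lra]. Qed.
Lemma finsum_nonneg {T} (f : T -> R) l : (forall x, In x l -> 0 <= f x) -> 0 <= finsum f l.
Proof. induction l; simpl; intros H; [lra|]. pose proof (H a (or_introl eq_refl)).
  assert (0 <= finsum f l) by (apply IHl; auto). lra. Qed.
Lemma finsum_le {T} (f g : T -> R) l : (forall x, In x l -> f x <= g x) -> finsum f l <= finsum g l.
Proof. induction l; simpl; intros H; [lra|]. pose proof (H a (or_introl eq_refl)).
  assert (finsum f l <= finsum g l) by (apply IHl; auto). lra. Qed.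
Lemma finsum_ext {T} (f g : T -> R) l : (forall x, In x l -> f x = g x) -> finsum f l = finsum g l.
Proof. induction l; simpl; intros H; [lra|]. rewrite (H a (or_introl eq_refl)), IHl; auto. Qed.
Lemma finsum_plus {T} (f g : T -> R) l : finsum (fun x => f x + g x) l = finsum f l + finsum g l.
Proof. induction l; simpl; [lra|rewrite IHl; lra]. Qed.
Lemma finsum_scal {T} (c : R) (f : T -> R) l : finsum (fun x => c * f x) l = c * finsum f l.
Proof. induction l; simpl; [lra|rewrite IHl; lra]. Qed.
Lemma finsum_map {T U} (f : U -> R) (g : T -> U) l : finsum f (map g l) = finsum (fun x => f (g x)) l.
Proof. induction l; simpl; [lra|rewrite IHl; lra]. Qed.
Lemma finsum_swap {T U} (F : T -> U -> R) l1 l2 :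
  finsum (fun x => finsum (F x) l2) l1 = finsum (fun y => finsum (fun x => F x y) l1) l2.
Proof. induction l1; simpl.
  - induction l2; simpl; [lra|rewrite <- IHl2; lra].
  - rewrite IHl1. rewrite <- finsum_plus. reflexivity. Qed.

Section Dec.
Context {T : Type} (eqd : forall x y : T, {x = y} + {x <> y}).

Lemma finsum_remove (f : T -> R) l a : NoDup l -> In a l ->
  finsum f l = f a + finsum f (remove eqd a l).
Proof. induction l; simpl; intros Hn Hi; [contradiction|]. inversion Hn; subst.
  destruct (eqd a a0) as [e|e].
  - subst. destruct Hi as [_|Hi]. rewrite notin_remove; auto. contradiction.
  - destruct Hi as [Hi|Hi]; [congruence|]. simpl. rewrite (IHl H2 Hi). lra. Qed.

Lemma remove_NoDup l a : NoDup l -> NoDup (remove eqd a l).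
Proof. induction l; simpl; intros Hn; auto. inversion Hn; subst.
  destruct (eqd a a0); auto. constructor; auto. intro Hi. apply in_remove in Hi. tauto. Qed.

Lemma finsum_incl (f : T -> R) l1 l2 : NoDup l1 -> NoDup l2 -> incl l1 l2 ->
  (forall x, In x l2 -> 0 <= f x) -> finsum f l1 <= finsum f l2.
Proof. revert l2; induction l1; simpl; intros l2 H1 H2 Hi Hf.
  - apply finsum_nonneg; auto.
  - inversion H1; subst. assert (Ha : In a l2) by (apply Hi; left; auto).
    rewrite (finsum_remove f l2 a H2 Ha).
    assert (finsum f l1 <= finsum f (remove eqd a l2)); [|lra].
    apply IHl1; auto. apply remove_NoDup; auto.
    intros x Hx. apply in_in_remove. intro; subst; contradiction. apply Hi; right; auto.
    intros x Hx. apply in_remove in Hx. apply Hf; tauto. Qed.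

Definition lunion (l1 l2 : list T) : list T :=
  l1 ++ filter (fun x => if in_dec eqd x l1 then false else true) l2.
Lemma lunion_NoDup l1 l2 : NoDup l1 -> NoDup l2 -> NoDup (lunion l1 l2).
Proof. intros H1 H2. unfold lunion. apply NoDup_app; auto. apply NoDup_filter; auto.
  intros x Hx Hx2. apply filter_In in Hx2. destruct (in_dec eqd x l1); [discriminate (proj2 Hx2)|contradiction]. Qed.
Lemma lunion_In l1 l2 x : In x (lunion l1 l2) <-> In x l1 \/ In x l2.
Proof. unfold lunion. rewrite in_app_iff, filter_In. destruct (in_dec eqd x l1); intuition. Qed.
End Dec.

Lemma finsum_remove_mask {T} (eqd : forall x y : T, {x = y} + {x <> y}) (f : T -> R) l a :
  finsum (fun z => if eqd z a then 0 else f z) l = finsum f (remove eqd a l).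
Proof. induction l; simpl; auto. destruct (eqd a0 a); destruct (eqd a a0); subst; simpl; try congruence; lra. Qed.

Lemma lub_unique (E : R -> Prop) a b : is_lub E a -> is_lub E b -> a = b.
Proof. intros [Ha1 Ha2] [Hb1 Hb2]. apply Rle_antisym; auto. Qed.

Lemma has_sum_unique {T} (S : T -> Prop) f a b : has_sum S f a -> has_sum S f b -> a = b.
Proof. apply lub_unique. Qed.

Lemma tsum_eq {T} (S : T -> Prop) f s : has_sum S f s -> tsum S f = s.
Proof. intros H. unfold tsum. destruct (epsilon_spec (inhabits 0) (has_sum S f) (ex_intro _ s H)) as [H1 H2] eqn:E.
  apply (has_sum_unique S f); auto. apply (epsilon_spec (inhabits 0) (has_sum S f) (ex_intro _ s H)). Qed.

Lemma has_sum_ub {T} (S : T -> Prop) f s l : has_sum S f s -> NoDup l -> (forall x, In x l -> S x) ->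
  finsum f l <= s.
Proof. intros [H _] Hn Hl. apply H. exists l; auto. Qed.

Lemma has_sum_le {T} (S : T -> Prop) f s B : has_sum S f s ->
  (forall l, NoDup l -> (forall x, In x l -> S x) -> finsum f l <= B) -> s <= B.
Proof. intros [_ H] Hb. apply H. intros r [l [Hn [Hl ->]]]. auto. Qed.

Lemma has_sum_nonneg {T} (S : T -> Prop) f s : has_sum S f s -> 0 <= s.
Proof. intros H. change 0 with (finsum f nil). apply (has_sum_ub S f s nil H); [constructor|simpl; tauto]. Qed.

Lemma has_sum_exists {T} (S : T -> Prop) f B :
  (forall l, NoDup l -> (forall x, In x l -> S x) -> finsum f l <= B) -> exists s, has_sum S f s /\ s <= B.
Proof. intros Hb. destruct (completeness (fin_sums S f)) as [m Hm].
  - exists B. intros r [l [Hn [Hl ->]]]. auto.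
  - exists 0. exists nil. split; [constructor|split; [simpl; tauto|reflexivity]].
  - exists m. split; auto. apply (has_sum_le S f m B Hm Hb). Qed.

Lemma has_sum_equiv {T U} (S : T -> Prop) (S' : U -> Prop) f g s :
  (forall r, fin_sums S f r -> fin_sums S' g r) -> (forall r, fin_sums S' g r -> fin_sums S f r) ->
  has_sum S f s -> has_sum S' g s.
Proof. intros H1 H2 [Hu Hl]. split. intros r Hr; apply Hu; auto. intros b Hb. apply Hl. intros r Hr; apply Hb; auto. Qed.

Lemma has_sum_ext {T} (S : T -> Prop) f g s : (forall x, S x -> f x = g x) -> has_sum S f s -> has_sum S g s.
Proof. intros He. apply has_sum_equiv; intros r [l [Hn [Hl ->]]]; exists l; repeat split; auto;
  apply finsum_ext; intros x Hx; specialize (He x (Hl x Hx)); auto. Qed.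

Lemma has_sum_0 {T} (S : T -> Prop) : has_sum S (fun _ => 0) 0.
Proof. split.
  - intros r [l [_ [_ ->]]]. induction l; simpl; lra.
  - intros b Hb. apply Hb. exists nil. split; [constructor|split;[simpl;tauto|reflexivity]]. Qed.

Lemma has_sum_plus {T} (eqd : forall x y : T, {x = y} + {x <> y}) (S : T -> Prop) f g a b :
  (forall x, S x -> 0 <= f x) -> (forall x, S x -> 0 <= g x) ->
  has_sum S f a -> has_sum S g b -> has_sum S (fun x => f x + g x) (a + b).
Proof. intros Hf Hg Ha Hb. split.
  - intros r [l [Hn [Hl ->]]]. rewrite finsum_plus.
    pose proof (has_sum_ub S f a l Ha Hn Hl). pose proof (has_sum_ub S g b l Hb Hn Hl). lra.
  - intros B HB.
    assert (forall l1 l2, NoDup l1 -> (forall x, In x l1 -> S x) -> NoDup l2 -> (forall x, In x l2 -> S x) ->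
      finsum f l1 + finsum g l2 <= B).
    { intros l1 l2 H1 S1 H2 S2. set (l := lunion eqd l1 l2).
      assert (Hn : NoDup l) by (apply lunion_NoDup; auto).
      assert (Hl : forall x, In x l -> S x) by (intros x Hx; apply lunion_In in Hx; destruct Hx; auto).
      assert (finsum f l1 <= finsum f l) by (apply (finsum_incl eqd); auto; intros x Hx; apply lunion_In; auto).
      assert (finsum g l2 <= finsum g l) by (apply (finsum_incl eqd); auto; intros x Hx; apply lunion_In; auto).
      assert (finsum (fun x => f x + g x) l <= B) by (apply HB; exists l; auto).
      rewrite finsum_plus in H3. lra. }
    assert (a <= B - b); [|lra].
    apply (has_sum_le S f a _ Ha). intros l1 H1 S1.
    assert (b <= B - finsum f l1); [|lra].
    apply (has_sum_le S g b _ Hb). intros l2 H2 S2. specialize (H l1 l2 H1 S1 H2 S2). lra. Qed.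

Lemma has_sum_scal {T} (S : T -> Prop) f a c : 0 <= c -> has_sum S f a -> has_sum S (fun x => c * f x) (c * a).
Proof. intros Hc Ha. destruct (Req_dec c 0) as [->|Hc0].
  - apply (has_sum_ext S (fun _ => 0)). intros; lra. replace (0 * a) with 0 by lra. apply has_sum_0.
  - split.
    + intros r [l [Hn [Hl ->]]]. rewrite finsum_scal. pose proof (has_sum_ub S f a l Ha Hn Hl).
      apply Rmult_le_compat_l; auto.
    + intros B HB. assert (a <= B / c).
      { apply (has_sum_le S f a _ Ha). intros l Hn Hl. assert (c * finsum f l <= B).
        { rewrite <- finsum_scal. apply HB. exists l; auto. }
        apply Rmult_le_reg_l with c; [lra|]. field_simplify; lra. }
      apply Rmult_le_compat_l with (r := c) in H; [|lra]. field_simplify in H; lra. Qed.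

Lemma has_sum_reindex {T} (S : T -> Prop) (phi psi : T -> T) f s :
  (forall x, S x -> S (phi x)) -> (forall x, S x -> S (psi x)) ->
  (forall x, S x -> phi (psi x) = x) -> (forall x, S x -> psi (phi x) = x) ->
  has_sum S f s -> has_sum S (fun x => f (phi x)) s.
Proof. intros H1 H2 H3 H4.
  assert (Hnd : forall (g h : T -> T) l, (forall x, S x -> S (g x)) -> (forall x, S x -> h (g x) = x) ->
    NoDup l -> (forall x, In x l -> S x) -> NoDup (map g l)).
  { intros g h l Hg Hgh. induction l; simpl; intros Hn Hl; constructor.
    - intros Hi. apply in_map_iff in Hi. destruct Hi as [y [Hy Hyl]]. inversion Hn; subst.
      assert (y = a). { rewrite <- (Hgh y), <- (Hgh a); auto. congruence. } subst; contradiction.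
    - inversion Hn; auto. }
  apply has_sum_equiv.
  - intros r [l [Hn [Hl ->]]]. exists (map psi l). split; [apply (Hnd psi phi); auto|split].
    + intros x Hx; apply in_map_iff in Hx; destruct Hx as [y [<- Hy]]; auto.
    + rewrite finsum_map. apply finsum_ext. intros x Hx. rewrite H3; auto.
  - intros r [l [Hn [Hl ->]]]. exists (map phi l). split; [apply (Hnd phi psi); auto|split].
    + intros x Hx; apply in_map_iff in Hx; destruct Hx as [y [<- Hy]]; auto.
    + rewrite finsum_map. reflexivity. Qed.

Lemma finsum_lub_le {T} (eqd : forall x y : T, {x = y} + {x <> y}) {Y} (S : T -> Prop) (F : Y -> T -> R) (s : Y -> R) (l : list Y) B :
  (forall y z, S z -> 0 <= F y z) -> (forall y, In y l -> has_sum S (F y) (s y)) ->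
  (forall lz, NoDup lz -> (forall z, In z lz -> S z) -> finsum (fun y => finsum (F y) lz) l <= B) ->
  finsum s l <= B.
Proof. revert B. induction l as [|y l IH]; simpl; intros B HF Hs HB.
  - specialize (HB nil). simpl in HB. apply HB; [constructor|simpl; tauto].
  - assert (finsum s l <= B - s y); [|lra]. apply IH; auto.
    intros lz Hn Hl. assert (s y <= B - finsum (fun y => finsum (F y) lz) l); [|lra].
    apply (has_sum_le S (F y) _ _ (Hs y (or_introl eq_refl))). intros lz' Hn' Hl'.
    set (L := lunion eqd lz lz').
    assert (HnL : NoDup L) by (apply lunion_NoDup; auto).
    assert (HlL : forall x, In x L -> S x) by (intros x Hx; apply lunion_In in Hx; destruct Hx; auto).
    specialize (HB L HnL HlL).
    assert (finsum (F y) lz' <= finsum (F y) L) by (apply (finsum_incl eqd); auto; intros x Hx; apply lunion_In; auto).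
    assert (finsum (fun y => finsum (F y) lz) l <= finsum (fun y => finsum (F y) L) l).
    { apply finsum_le. intros y' _. apply (finsum_incl eqd); auto. intros x Hx; apply lunion_In; auto. }
    lra. Qed.

Fixpoint psum (f : nat -> R) (n : nat) : R :=
  match n with O => 0 | S m => psum f m + f m end.

Lemma psum_ext f g n : (forall k, (k < n)%nat -> f k = g k) -> psum f n = psum g n.
Proof. induction n; simpl; intros H; auto. rewrite IHn, H; auto. Qed.
Lemma psum_plus f g n : psum (fun k => f k + g k) n = psum f n + psum g n.
Proof. induction n; simpl; [lra|rewrite IHn; lra]. Qed.
Lemma psum_scal c f n : psum (fun k => c * f k) n = c * psum f n.
Proof. induction n; simpl; [lra|rewrite IHn; lra]. Qed.
Lemma psum_nonneg f n : (forall k, (k < n)%nat -> 0 <= f k) -> 0 <= psum f n.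
Proof. induction n; simpl; intros H; [lra|]. assert (0 <= psum f n) by (apply IHn; auto).
  assert (0 <= f n) by (apply H; lia). lra. Qed.
Lemma psum_le f g n : (forall k, (k < n)%nat -> f k <= g k) -> psum f n <= psum g n.
Proof. induction n; simpl; intros H; [lra|]. assert (psum f n <= psum g n) by (apply IHn; auto).
  assert (f n <= g n) by (apply H; lia). lra. Qed.
Lemma psum_term f n k : (forall j, (j < n)%nat -> 0 <= f j) -> (k < n)%nat -> f k <= psum f n.
Proof. induction n; simpl; intros H Hk; [lia|].
  assert (0 <= psum f n) by (apply psum_nonneg; auto).
  destruct (Nat.eq_dec k n); subst. lra. assert (f k <= psum f n) by (apply IHn; auto; lia).
  assert (0 <= f n) by (apply H; lia). lra. Qed.
Lemma psum_mono f m n : (forall j, 0 <= f j) -> (m <= n)%nat -> psum f m <= psum f n.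
Proof. intros H Hmn; induction Hmn; simpl; auto. lra. specialize (H m0); lra. Qed.
Lemma finsum_seq f n : finsum f (seq 0 n) = psum f n.
Proof. induction n; [reflexivity|]. rewrite seq_S, finsum_app, IHn. simpl. lra. Qed.
Lemma finsum_swap_psum {T} (F : nat -> T -> R) n l :
  finsum (fun x => psum (fun k => F k x) n) l = psum (fun k => finsum (F k) l) n.
Proof. induction n; simpl. induction l; simpl; [lra|rewrite IHl; lra].
  rewrite finsum_plus, IHn. reflexivity. Qed.
Lemma conv_psum (a b : nat -> R) N :
  psum (fun n => psum (fun k => a k * b (n - k)%nat) (S n)) N = psum (fun k => a k * psum b (N - k)) N.
Proof. induction N; [simpl; lra|]. change (psum (fun n => psum (fun k => a k * b (n - k)%nat) (S n)) (S N)) with (psum (fun n => psum (fun k => a k * b (n - k)%nat) (S n)) N + psum (fun k => a k * b (N - k)%nat) (S N)). rewrite IHN.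
  rewrite (psum_ext (fun k => a k * psum b (S N - k)) (fun k => a k * psum b (N - k) + a k * b (N - k)%nat)).
  2:{ intros k Hk. replace (S N - k)%nat with (S (N - k)) by lia. simpl. lra. }
  rewrite psum_plus. cbn [psum]. replace (N - N)%nat with 0%nat by lia. cbn [psum]. lra. Qed.

Definition zadd (x y : list Z) : list Z := map (fun p => (fst p + snd p)%Z) (combine x y).
Definition leq := list_eq_dec Z.eq_dec.

Lemma zsub_length x y : length (zsub x y) = Nat.min (length x) (length y).
Proof. unfold zsub. rewrite length_map, length_combine. reflexivity. Qed.
Lemma zadd_length x y : length (zadd x y) = Nat.min (length x) (length y).
Proof. unfold zadd. rewrite length_map, length_combine. reflexivity. Qed.
Lemma pt_zsub d x y : pt d x -> pt d y -> pt d (zsub x y).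
Proof. unfold pt; intros; rewrite zsub_length; lia. Qed.
Lemma pt_zadd d x y : pt d x -> pt d y -> pt d (zadd x y).
Proof. unfold pt; intros; rewrite zadd_length; lia. Qed.

Lemma zsub_cons a x b y : zsub (a :: x) (b :: y) = (a - b)%Z :: zsub x y.
Proof. reflexivity. Qed.
Lemma zadd_cons a x b y : zadd (a :: x) (b :: y) = (a + b)%Z :: zadd x y.
Proof. reflexivity. Qed.

Lemma zsub_zadd x y : length x = length y -> zsub (zadd x y) y = x.
Proof. revert y; induction x; destruct y; simpl; intros H; try discriminate; auto.
  rewrite zadd_cons, zsub_cons, IHx by lia. f_equal; lia. Qed.
Lemma zadd_zsub x y : length x = length y -> zadd (zsub x y) y = x.
Proof. revert y; induction x; destruct y; simpl; intros H; try discriminate; auto.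
  rewrite zsub_cons, zadd_cons, IHx by lia. f_equal; lia. Qed.
Lemma zsub_zsub x y : length x = length y -> zsub x (zsub x y) = y.
Proof. revert y; induction x; destruct y; simpl; intros H; try discriminate; auto.
  rewrite !zsub_cons, IHx by lia. f_equal; lia. Qed.
Lemma zsub_shift y z x : length y = length x -> length z = length x -> zsub (zsub y x) (zsub z x) = zsub y z.
Proof. revert z x; induction y; destruct z, x; simpl; intros H1 H2; try discriminate; auto.
  rewrite !zsub_cons, IHy by lia. f_equal; lia. Qed.
Lemma zsub_diag x : zsub x x = zero (length x).
Proof. induction x; simpl; auto. rewrite zsub_cons, IHx. unfold zero; simpl. f_equal; lia. Qed.
Lemma zadd_zero x : zadd (zero (length x)) x = x.
Proof. induction x; simpl; auto. unfold zero in *; simpl. rewrite zadd_cons, IHx. reflexivity. Qed.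
Lemma zsub_eq_zero d y x : pt d y -> pt d x -> zsub y x = zero d -> y = x.
Proof. unfold pt; intros H1 H2 H. rewrite <- (zadd_zsub y x) by lia. rewrite H, <- H2. apply zadd_zero. Qed.
Lemma pt_zero d : pt d (zero d).
Proof. unfold pt, zero. apply repeat_length. Qed.

Section Walk.
Variable d : nat.
Variable mu : list Z -> R.
Hypothesis Hmu : step_dist d mu.

Definition stepf (f : list Z -> R) (y : list Z) : R := tsum (pt d) (fun z => f z * mu (zsub y z)).

Lemma mu_nonneg x : 0 <= mu x.
Proof. destruct Hmu as [H _]; auto. Qed.

Lemma NoDup_map_inj_on (g : list Z -> list Z) l : NoDup l ->
  (forall a b, In a l -> In b l -> g a = g b -> a = b) -> NoDup (map g l).
Proof. induction l; simpl; intros Hn Hi; constructor.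
  - intros Hx. apply in_map_iff in Hx. destruct Hx as [b [Hb Hbl]]. inversion Hn; subst.
    assert (b = a) by (apply Hi; auto). subst; contradiction.
  - inversion Hn; apply IHl; auto. Qed.

Lemma mu_list_le (g : list Z -> list Z) l : NoDup l -> (forall z, In z l -> pt d z) ->
  (forall z, pt d z -> pt d (g z)) -> (forall a b, pt d a -> pt d b -> g a = g b -> a = b) ->
  finsum (fun z => mu (g z)) l <= 1.
Proof. intros Hn Hl Hg Hi. rewrite <- finsum_map. destruct Hmu as [_ [_ Hs]].
  apply (has_sum_ub _ _ _ _ Hs). apply NoDup_map_inj_on; auto.
  intros x Hx. apply in_map_iff in Hx. destruct Hx as [z [<- Hz]]. auto. Qed.

Lemma mu_sum_y y l : pt d y -> NoDup l -> (forall z, In z l -> pt d z) -> finsum (fun z => mu (zsub y z)) l <= 1.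
Proof. intros Hy Hn Hl. apply (mu_list_le (zsub y)); auto. intros; apply pt_zsub; auto.
  intros a b Ha Hb E. unfold pt in *. rewrite <- (zsub_zsub y a), <- (zsub_zsub y b) by lia. congruence. Qed.

Lemma mu_sum_z z l : pt d z -> NoDup l -> (forall y, In y l -> pt d y) -> finsum (fun y => mu (zsub y z)) l <= 1.
Proof. intros Hz Hn Hl. apply (mu_list_le (fun y => zsub y z)); auto. intros; apply pt_zsub; auto.
  intros a b Ha Hb E. unfold pt in *. rewrite <- (zadd_zsub a z), <- (zadd_zsub b z) by lia. congruence. Qed.

Definition bounded (f : list Z -> R) (M : R) :=
  (forall z, pt d z -> 0 <= f z) /\ (forall l, NoDup l -> (forall z, In z l -> pt d z) -> finsum f l <= M).

Lemma step_has_sum f M y : bounded f M -> pt d y ->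
  has_sum (pt d) (fun z => f z * mu (zsub y z)) (stepf f y).
Proof. intros [Hf Hb] Hy.
  assert (HM : 0 <= M) by (apply (Hb nil); [constructor|simpl;tauto]).
  assert (Hp : forall z, pt d z -> f z <= M).
  { intros z Hz. specialize (Hb (z :: nil)). simpl in Hb. assert (f z + 0 <= M); [|lra].
    apply Hb. constructor; [simpl; tauto|constructor]. intros z' [<-|[]]; auto. }
  destruct (has_sum_exists (pt d) (fun z => f z * mu (zsub y z)) M) as [s [Hs _]].
  - intros l Hn Hl. apply Rle_trans with (finsum (fun z => M * mu (zsub y z)) l).
    + apply finsum_le. intros z Hz. apply Rmult_le_compat_r. apply mu_nonneg. auto.
    + rewrite finsum_scal. pose proof (mu_sum_y y l Hy Hn Hl). nra.
  - unfold stepf. rewrite (tsum_eq _ _ _ Hs). auto. Qed.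

Lemma step_bounded f M : bounded f M -> bounded (stepf f) M.
Proof. intros HB. pose proof HB as [Hf Hb]. split.
  - intros y Hy. apply (has_sum_nonneg _ _ _ (step_has_sum f M y HB Hy)).
  - intros l Hn Hl. apply (finsum_lub_le leq (pt d) (fun y z => f z * mu (zsub y z))).
    + intros y z Hz. apply Rmult_le_pos; auto. apply mu_nonneg.
    + intros y Hy. apply (step_has_sum f M); auto.
    + intros lz Hnz Hlz. rewrite finsum_swap.
      apply Rle_trans with (finsum f lz); [|apply Hb; auto].
      apply finsum_le. intros z Hz. rewrite finsum_scal.
      pose proof (mu_sum_z z l (Hlz z Hz) Hn Hl). pose proof (Hf z (Hlz z Hz)). nra. Qed.

Definition delta (a : list Z) (y : list Z) : R := if leq y a then 1 else 0.

Lemma delta_bounded : bounded (delta (zero d)) 1.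
Proof. split.
  - intros; unfold delta; destruct leq; lra.
  - intros l Hn _. induction l; simpl; [lra|]. inversion Hn; subst. unfold delta at 1.
    destruct (leq a (zero d)).
    + subst. assert (finsum (delta (zero d)) l = 0); [|lra].
      clear -H1. induction l; simpl; auto. unfold delta at 1. destruct leq. subst; simpl in H1; tauto.
      rewrite IHl. lra. intro; apply H1; simpl; auto.
    + specialize (IHl H2). lra. Qed.

Lemma law_0 y : law d mu 0 y = delta (zero d) y.
Proof. reflexivity. Qed.
Lemma law_S n y : law d mu (S n) y = stepf (law d mu n) y.
Proof. reflexivity. Qed.

Lemma law_bounded n : bounded (law d mu n) 1.
Proof. induction n.
  - apply delta_bounded.
  - apply (step_bounded (law d mu n) 1) in IHn. destruct IHn as [H1 H2]. split; auto. Qed.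

Fixpoint hT (x : list Z) (n : nat) (y : list Z) : R :=
  match n with
  | O => delta (zero d) y
  | S m => stepf (fun z => if leq z x then 0 else hT x m z) y
  end.

Lemma hT_inv x : pt d x -> forall n,
  (forall z, pt d z -> 0 <= hT x n z) /\
  (forall l, NoDup l -> (forall z, In z l -> pt d z) -> finsum (hT x n) l + psum (fun k => hT x k x) n <= 1).
Proof. intros Hx. induction n.
  - destruct delta_bounded as [H1 H2]. split; auto. intros l Hn Hl. simpl. specialize (H2 l Hn Hl). rewrite Rplus_0_r. exact H2.
  - destruct IHn as [H1 H2].
    assert (HB : bounded (fun z => if leq z x then 0 else hT x n z) (1 - psum (fun k => hT x k x) n - hT x n x)).
    { split. intros z Hz. destruct leq; auto; lra.
      intros l Hn Hl. rewrite (finsum_remove_mask leq).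
      assert (NoDup (x :: remove leq x l)). { constructor. apply remove_In. apply remove_NoDup; auto. }
      specialize (H2 _ H). simpl in H2.
      assert (hT x n x + finsum (hT x n) (remove leq x l) + psum (fun k => hT x k x) n <= 1); [|lra].
      apply H2. intros z [<-|Hz]; auto. apply in_remove in Hz. apply Hl; tauto. }
    apply step_bounded in HB. destruct HB as [B1 B2]. split; auto.
    intros l Hn Hl. specialize (B2 l Hn Hl). change (psum (fun k => hT x k x) (S n)) with (psum (fun k => hT x k x) n + hT x n x). change (finsum (hT x (S n)) l) with (finsum (stepf (fun z => if leq z x then 0 else hT x n z)) l). lra. Qed.

Lemma has_sum_psum (F : nat -> list Z -> R) (s : nat -> R) N :
  (forall k z, (k < N)%nat -> pt d z -> 0 <= F k z) -> (forall k, (k < N)%nat -> has_sum (pt d) (F k) (s k)) ->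
  has_sum (pt d) (fun z => psum (fun k => F k z) N) (psum s N).
Proof. induction N; intros Hp Hs; simpl.
  - apply has_sum_0.
  - apply (has_sum_plus leq).
    + intros z Hz. apply psum_nonneg. intros; apply Hp; auto; lia.
    + intros; apply Hp; auto.
    + apply IHN; auto.
    + apply Hs; auto. Qed.

Lemma law_shift x m y : pt d x -> pt d y ->
  has_sum (pt d) (fun z => law d mu m (zsub z x) * mu (zsub y z)) (law d mu (S m) (zsub y x)).
Proof. intros Hx Hy. pose proof (step_has_sum _ _ (zsub y x) (law_bounded m) (pt_zsub _ _ _ Hy Hx)) as H.
  rewrite <- law_S in H.
  apply (has_sum_reindex _ (fun z => zsub z x) (fun w => zadd w x)) in H.
  - eapply has_sum_ext; [|exact H]. intros z Hz. simpl. unfold pt in *. rewrite zsub_shift by lia. reflexivity.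
  - intros; apply pt_zsub; auto.
  - intros; apply pt_zadd; auto.
  - intros w Hw. unfold pt in *. apply zsub_zadd; lia.
  - intros w Hw. unfold pt in *. apply zadd_zsub; lia. Qed.

Lemma decomp x : pt d x -> forall n y, pt d y ->
  law d mu n y = psum (fun k => hT x k x * law d mu (n - k) (zsub y x)) (S n) + (if leq y x then 0 else hT x n y).
Proof. intros Hx n. induction n; intros y Hy.
  - cbn [psum]. change (0 - 0)%nat with 0%nat. change (law d mu 0 ?w) with (delta (zero d) w). cbn [hT]. unfold delta.
    destruct (leq y x).
    + subst. rewrite zsub_diag. unfold pt in Hx; rewrite Hx. destruct (leq (zero d) (zero d)); [|congruence].
      destruct (leq x (zero d)); lra.
    + destruct (leq (zsub y x) (zero d)) as [e|e]. apply zsub_eq_zero in e; auto; congruence. lra.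
  - assert (Hinv := hT_inv x Hx n). destruct Hinv as [Hi1 Hi2].
    set (mask := fun z => if leq z x then 0 else hT x n z).
    assert (HB : bounded mask 1).
    { split. intros z Hz; unfold mask; destruct leq; auto; lra.
      intros l Hn Hl. unfold mask. rewrite (finsum_remove_mask leq).
      assert (NoDup (x :: remove leq x l)). { constructor. apply remove_In. apply remove_NoDup; auto. }
      specialize (Hi2 _ H). simpl in Hi2.
      assert (hT x n x + finsum (hT x n) (remove leq x l) + psum (fun k => hT x k x) n <= 1).
      { apply Hi2. intros z [<-|Hz]; auto. apply in_remove in Hz. apply Hl; tauto. }
      assert (0 <= hT x n x) by auto. assert (0 <= psum (fun k => hT x k x) n) by (apply psum_nonneg; intros; apply (proj1 (hT_inv x Hx k)); auto).
      lra. }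
    assert (H1 : has_sum (pt d) (fun z => law d mu n z * mu (zsub y z)) (law d mu (S n) y)).
    { rewrite law_S. apply (step_has_sum _ 1); auto. apply law_bounded. }
    assert (H2 : has_sum (pt d) (fun z => psum (fun k => hT x k x * (law d mu (n - k) (zsub z x) * mu (zsub y z))) (S n) + mask z * mu (zsub y z))
        (psum (fun k => hT x k x * law d mu (S (n - k)) (zsub y x)) (S n) + hT x (S n) y)).
    { apply (has_sum_plus leq).
      - intros z Hz. apply psum_nonneg. intros k _. apply Rmult_le_pos. apply (proj1 (hT_inv x Hx k)); auto.
        apply Rmult_le_pos. apply (proj1 (law_bounded _)). apply pt_zsub; auto. apply mu_nonneg.
      - intros z Hz. apply Rmult_le_pos. apply (proj1 HB); auto. apply mu_nonneg.
      - apply has_sum_psum.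
        + intros k z _ Hz. apply Rmult_le_pos. apply (proj1 (hT_inv x Hx k)); auto.
          apply Rmult_le_pos. apply (proj1 (law_bounded _)). apply pt_zsub; auto. apply mu_nonneg.
        + intros k _. apply has_sum_scal. apply (proj1 (hT_inv x Hx k)); auto. apply law_shift; auto.
      - simpl. apply (step_has_sum _ 1); auto. }
    assert (H3 : has_sum (pt d) (fun z => law d mu n z * mu (zsub y z))
        (psum (fun k => hT x k x * law d mu (S (n - k)) (zsub y x)) (S n) + hT x (S n) y)).
    { eapply has_sum_ext; [|exact H2]. intros z Hz. rewrite (IHn z Hz). fold (mask z).
      rewrite Rmult_plus_distr_r. f_equal. rewrite <- finsum_seq, <- finsum_seq.
      rewrite Rmult_comm, <- finsum_scal. apply finsum_ext. intros; lra. }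
    rewrite (has_sum_unique _ _ _ _ H1 H3).
    change (psum (fun k => hT x k x * law d mu (S n - k) (zsub y x)) (S (S n))) with
      (psum (fun k => hT x k x * law d mu (S n - k) (zsub y x)) (S n) + hT x (S n) x * law d mu (S n - S n) (zsub y x)).
    rewrite (psum_ext (fun k => hT x k x * law d mu (S n - k) (zsub y x)) (fun k => hT x k x * law d mu (S (n - k)) (zsub y x))).
    2:{ intros k Hk. replace (S n - k)%nat with (S (n - k)) by lia. reflexivity. }
    rewrite Nat.sub_diag. change (law d mu 0 ?w) with (delta (zero d) w). unfold delta.
    destruct (leq y x).
    + subst. rewrite zsub_diag. unfold pt in Hx; rewrite Hx. destruct (leq (zero d) (zero d)); [|congruence]. lra.
    + destruct (leq (zsub y x) (zero d)) as [e|e]. apply zsub_eq_zero in e; auto; congruence. lra. Qed.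

End Walk.

Section Green.
Variable d : nat.
Variable mu : list Z -> R.
Hypothesis Hmu : step_dist d mu.
Hypothesis Htr : transient d mu.

Lemma green_has_sum x : pt d x -> has_sum (fun _ : nat => True) (fun n => law d mu n x) (green d mu x).
Proof. intros Hx. destruct (Htr x Hx) as [s Hs]. unfold green. rewrite (tsum_eq _ _ _ Hs). auto. Qed.

Lemma green_nonneg x : pt d x -> 0 <= green d mu x.
Proof. intros Hx. apply (has_sum_nonneg _ _ _ (green_has_sum x Hx)). Qed.

Lemma green0_ge1 : 1 <= green d mu (zero d).
Proof. pose proof (has_sum_ub _ _ _ (0%nat :: nil) (green_has_sum _ (pt_zero d))) as H.
  simpl in H. destruct (list_eq_dec Z.eq_dec (zero d) (zero d)); [|congruence]. assert (1 + 0 <= green d mu (zero d)); [|lra].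
  apply H. constructor; [simpl; tauto|constructor]. simpl; tauto. Qed.

Lemma green_le x : pt d x -> green d mu x <= green d mu (zero d).
Proof. intros Hx. set (G0 := green d mu (zero d)).
  assert (HG0 : 1 <= G0) by apply green0_ge1.
  apply (has_sum_le _ _ _ _ (green_has_sum x Hx)). intros l Hn _.
  set (N := S (list_max l)).
  apply Rle_trans with (finsum (fun n => law d mu n x) (seq 0 N)).
  { apply (finsum_incl Nat.eq_dec); auto. apply seq_NoDup.
    intros k Hk. apply in_seq. split; [lia|]. unfold N. 
    assert (k <= list_max l)%nat; [|lia]. pose proof (proj1 (list_max_le l (list_max l)) (le_n _)) as HF. rewrite Forall_forall in HF. auto.
    intros k _. apply (proj1 (law_bounded d mu Hmu k)); auto. }
  rewrite finsum_seq.
  rewrite (psum_ext _ (fun n => psum (fun k => hT d mu x k x * law d mu (n - k) (zero d)) (S n))).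
  2:{ intros n _. rewrite (decomp d mu Hmu x Hx n x Hx). rewrite zsub_diag. unfold pt in Hx; rewrite Hx.
      destruct (leq x x); [lra|congruence]. }
  rewrite (conv_psum (fun k => hT d mu x k x) (fun j => law d mu j (zero d))).
  apply Rle_trans with (psum (fun k => hT d mu x k x * G0) N).
  { apply psum_le. intros k _. apply Rmult_le_compat_l. apply (proj1 (hT_inv d mu Hmu x Hx k)); auto.
    rewrite <- finsum_seq. apply (has_sum_ub _ _ _ _ (green_has_sum _ (pt_zero d))). apply seq_NoDup. auto. }
  rewrite (psum_ext _ (fun k => G0 * hT d mu x k x)) by (intros; lra). rewrite psum_scal.
  pose proof (proj2 (hT_inv d mu Hmu x Hx N) nil (NoDup_nil _) (fun z H => False_ind _ H)). rewrite finsum_nil in H.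
  nra. Qed.
End Green.

Definition coords (n : nat) : list Z :=
  map (fun i => (- 2 ^ Z.of_nat n + Z.of_nat i)%Z) (seq 0 (2 ^ S n)).
Fixpoint boxes (c : list Z) (d : nat) : list (list Z) :=
  match d with O => nil :: nil | S d' => flat_map (fun z => map (cons z) (boxes c d')) c end.

Lemma boxes_length c d : length (boxes c d) = (length c ^ d)%nat.
Proof. induction d; simpl; auto. rewrite length_flat_map.
  rewrite (map_ext _ (fun _ => length (boxes c d))) by (intros; apply length_map).
  rewrite IHd. simpl. generalize (length c ^ d)%nat. intros m. clear IHd. induction c; simpl; auto. Qed.

Lemma boxes_In c x : Forall (fun z => In z c) x -> In x (boxes c (length x)).
Proof. induction x; simpl; intros H; auto. inversion H; subst. apply in_flat_map. exists a. split; auto.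
  apply in_map. auto. Qed.

Lemma coords_In n z : (- 2 ^ Z.of_nat n <= z < 2 ^ Z.of_nat n)%Z -> In z (coords n).
Proof. intros H. unfold coords. apply in_map_iff. exists (Z.to_nat (z + 2 ^ Z.of_nat n)). split.
  - rewrite Z2Nat.id; lia.
  - apply in_seq. split; [lia|]. apply Nat2Z.inj_lt. rewrite Z2Nat.id by lia.
    replace (Z.of_nat (0 + 2 ^ S n)) with (2 ^ Z.of_nat (S n))%Z.
    rewrite Nat2Z.inj_succ. rewrite Z.pow_succ_r by lia. lia.
    rewrite Nat.add_0_l, Nat2Z.inj_pow. reflexivity. Qed.

Lemma coords_length n : length (coords n) = (2 ^ S n)%nat.
Proof. unfold coords. rewrite length_map, length_seq. auto. Qed.

Lemma V_card d n l : NoDup l -> (forall x, In x l -> V d n x) -> (length l <= (2 ^ S n) ^ d)%nat.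
Proof. intros Hn Hl. rewrite <- coords_length, <- boxes_length. apply NoDup_incl_length; auto.
  intros x Hx. destruct (Hl x Hx) as [Hp Hf]. unfold pt in Hp. rewrite <- Hp. apply boxes_In.
  rewrite Forall_forall in *. intros z Hz. apply coords_In. auto. Qed.

Lemma finsum_const {T} (c : R) (l : list T) : finsum (fun _ => c) l = INR (length l) * c.
Proof. induction l; [simpl; lra|]. cbn [finsum fold_right length]. unfold finsum in IHl. rewrite IHl, S_INR. lra. Qed.

Lemma V_zero d n : V d n (zero d).
Proof. split. apply pt_zero. unfold zero. apply Forall_forall. intros z Hz. apply repeat_spec in Hz. subst.
  pose proof (Z.pow_pos_nonneg 2 (Z.of_nat n)). lia. Qed.

Section U.
Variable d : nat.
Variable mu : list Z -> R.
Hypothesis Hmu : step_dist d mu.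
Hypothesis Htr : transient d mu.

Lemma U_props n : has_sum (V d n) (green d mu) (U d mu (V d n)) /\
  green d mu (zero d) <= U d mu (V d n) /\ U d mu (V d n) <= 2 ^ (S n * d) * green d mu (zero d).
Proof. set (G0 := green d mu (zero d)).
  assert (HG : 1 <= G0) by (apply green0_ge1; auto).
  destruct (has_sum_exists (V d n) (green d mu) (2 ^ (S n * d) * G0)) as [s [Hs Hb]].
  { intros l Hn Hl. apply Rle_trans with (finsum (fun _ => G0) l).
    - apply finsum_le. intros x Hx. apply green_le; auto. apply (Hl x Hx).
    - rewrite finsum_const. apply Rmult_le_compat_r; [lra|]. rewrite pow_mult.
      replace 2 with (INR 2) by (simpl; lra). rewrite <- !pow_INR. apply le_INR. apply V_card; auto. }
  unfold U. rewrite (tsum_eq _ _ _ Hs). split; auto. split; auto.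
  pose proof (has_sum_ub _ _ _ (zero d :: nil) Hs). simpl in H. assert (G0 + 0 <= s); [|lra].
  apply H. constructor; [simpl; tauto|constructor]. intros x [<-|[]]. apply V_zero. Qed.
End U.

Definition sumsq (x : list Z) : R := fold_right (fun z acc => IZR z * IZR z + acc) 0 x.
Lemma sumsq_nonneg x : 0 <= sumsq x.
Proof. induction x; simpl; [lra|]. nra. Qed.
Lemma sumsq_ge x z : In z x -> IZR z * IZR z <= sumsq x.
Proof. induction x; simpl; intros H; [contradiction|]. pose proof (sumsq_nonneg x).
  destruct H as [<-|H]. lra. specialize (IHx H). nra. Qed.
Lemma enorm_ge x z : In z x -> Rabs (IZR z) <= enorm x.
Proof. intros H. unfold enorm. fold (sumsq x). rewrite <- sqrt_Rsqr_abs. apply sqrt_le_1_alt.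
  unfold Rsqr. apply sumsq_ge; auto. Qed.
Lemma sq_le_abs a B : Rabs a <= B -> a * a <= B * B.
Proof. intros H. pose proof (Rsqr_abs a). unfold Rsqr in H0. rewrite H0. pose proof (Rabs_pos a). nra. Qed.
Lemma sumsq_le x B : (forall z, In z x -> Rabs (IZR z) <= B) -> sumsq x <= INR (length x) * (B * B).
Proof. induction x; intros H; [simpl; lra|]. unfold sumsq in *; cbn [length fold_right] in *. rewrite S_INR.
  assert (Rabs (IZR a) <= B) by (apply H; left; auto). pose proof (sq_le_abs _ _ H0).
  assert (fold_right (fun z acc => IZR z * IZR z + acc) 0 x <= INR (length x) * (B * B)) by (apply IHx; intros; apply H; right; auto). lra. Qed.

Lemma IZR_pow2 n : IZR (2 ^ Z.of_nat n) = 2 ^ n.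
Proof. rewrite <- pow_IZR. reflexivity. Qed.

Lemma enorm_upper d n x : V d n x -> enorm x <= (INR d + 1) * 2 ^ n.
Proof. intros [Hp Hf]. unfold enorm. fold (sumsq x).
  assert (H2 : 0 < 2 ^ n) by (apply pow_lt; lra).
  assert (sumsq x <= ((INR d + 1) * 2 ^ n) * ((INR d + 1) * 2 ^ n)).
  { apply Rle_trans with (INR (length x) * (2 ^ n * 2 ^ n)).
    - apply sumsq_le. intros z Hz. rewrite Forall_forall in Hf. specialize (Hf z Hz).
      rewrite <- IZR_pow2. apply Rabs_le. split. rewrite <- opp_IZR. apply IZR_le; lia. apply IZR_le; lia.
    - unfold pt in Hp. rewrite Hp. pose proof (pos_INR d). nra. }
  rewrite <- (sqrt_square ((INR d + 1) * 2 ^ n)). apply sqrt_le_1_alt; auto.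
  pose proof (pos_INR d). nra. Qed.

Lemma enorm_lower d k x : pt d x -> x <> zero d -> V d k x -> (k = 0%nat \/ ~ V d (k - 1) x) ->
  2 ^ k / 2 <= enorm x.
Proof. intros Hp Hz Hv Hk. destruct k as [|j].
  - simpl. assert (exists z, In z x /\ z <> 0%Z).
    { apply NNPP. intros Hn. apply Hz. unfold pt in Hp. rewrite <- Hp. unfold zero.
      apply Forall_eq_repeat. apply Forall_forall. intros z Hz'. apply NNPP. intros Hne.
      apply Hn. exists z. split; auto. }
    destruct H as [z [Hzi Hz0]]. pose proof (enorm_ge x z Hzi).
    assert (1 <= Rabs (IZR z)). { destruct (Z_lt_le_dec z 0).
      - rewrite Rabs_left. rewrite <- opp_IZR. apply IZR_le. lia. apply IZR_lt; lia.
      - rewrite Rabs_right. apply IZR_le. lia. apply Rle_ge, IZR_le; lia. }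
    lra.
  - destruct Hk as [Hk|Hk]; [discriminate|]. simpl in Hk. rewrite Nat.sub_0_r in Hk.
    assert (exists z, In z x /\ ~ (- 2 ^ Z.of_nat j <= z < 2 ^ Z.of_nat j)%Z).
    { apply NNPP. intros Hn. apply Hk. split; auto. apply Forall_forall. intros z Hz'. apply NNPP. intros Hne.
      apply Hn. exists z. split; auto. }
    destruct H as [z [Hzi Hzb]]. pose proof (enorm_ge x z Hzi).
    replace (2 ^ S j / 2) with (2 ^ j) by (simpl; field).
    assert (2 ^ j <= Rabs (IZR z)); [|lra]. rewrite <- IZR_pow2.
    pose proof (Z.pow_pos_nonneg 2 (Z.of_nat j)).
    destruct (Z_lt_le_dec z 0).
    + rewrite Rabs_left by (apply IZR_lt; lia). rewrite <- opp_IZR. apply IZR_le. lia.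
    + rewrite Rabs_right by (apply Rle_ge, IZR_le; lia). apply IZR_le. lia. Qed.

Lemma V_mono d m n x : (m <= n)%nat -> V d m x -> V d n x.
Proof. intros Hmn [Hp Hf]. split; auto. rewrite Forall_forall in *. intros z Hz. specialize (Hf z Hz).
  assert (2 ^ Z.of_nat m <= 2 ^ Z.of_nat n)%Z by (apply Z.pow_le_mono_r; lia). lia. Qed.

Lemma V_least d N x : V d N x -> exists k, (k <= N)%nat /\ V d k x /\ (k = 0%nat \/ ~ V d (k - 1) x).
Proof. induction N; intros H.
  - exists 0%nat. auto.
  - destruct (classic (V d N x)) as [Hv|Hv].
    + destruct (IHN Hv) as [k [Hk1 Hk2]]. exists k. split; auto.
    + exists (S N). split; auto. split; auto. right. simpl. rewrite Nat.sub_0_r. auto. Qed.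

Lemma coords_bound (x : list Z) : exists K, Forall (fun z => (- 2 ^ Z.of_nat K <= z < 2 ^ Z.of_nat K)%Z) x.
Proof. induction x.
  - exists 0%nat. constructor.
  - destruct IHx as [K HK]. set (K' := Nat.max K (Z.to_nat (Z.abs a))). exists K'. constructor.
    + assert (Z.abs a < 2 ^ Z.abs a)%Z by (apply Z.pow_gt_lin_r; lia).
      assert (2 ^ Z.abs a <= 2 ^ Z.of_nat K')%Z by (apply Z.pow_le_mono_r; lia). lia.
    + rewrite Forall_forall in *. intros z Hz. specialize (HK z Hz).
      assert (2 ^ Z.of_nat K <= 2 ^ Z.of_nat K')%Z by (apply Z.pow_le_mono_r; lia). lia. Qed.

Lemma list_V d (l : list (list Z)) : (forall x, In x l -> pt d x) -> exists N, forall x, In x l -> V d N x.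
Proof. induction l; intros H.
  - exists 0%nat. simpl; tauto.
  - destruct IHl as [N HN]. intros; apply H; simpl; auto.
    destruct (coords_bound a) as [K HK]. exists (Nat.max N K). intros x [<-|Hx].
    + apply (V_mono d K). lia. split; auto. apply H; simpl; auto.
    + apply (V_mono d N). lia. auto. Qed.

Lemma Rsup_spec E m : is_lub E m -> Rsup E = m.
Proof. intros H. unfold Rsup. apply (lub_unique E); auto. apply (epsilon_spec (inhabits 0) (is_lub E) (ex_intro _ m H)). Qed.

Lemma glb_unique E a b : is_glb E a -> is_glb E b -> a = b.
Proof. intros [Ha1 Ha2] [Hb1 Hb2]. apply Rle_antisym; auto. Qed.

Lemma Rinf_spec E m : is_glb E m -> Rinf E = m.
Proof. intros H. unfold Rinf. apply (glb_unique E); auto. apply (epsilon_spec (inhabits 0) (is_glb E) (ex_intro _ m H)). Qed.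

Lemma limsup_spec (a : nat -> R) B : (forall n, - B <= a n <= B) ->
  (forall eps, 0 < eps -> exists N, forall n, (N <= n)%nat -> a n <= limsup a + eps) /\
  (forall eps, 0 < eps -> forall N, exists n, (N <= n)%nat /\ limsup a - eps <= a n).
Proof. intros HB.
  set (t := fun n => Rsup (fun v => exists k, (n <= k)%nat /\ v = a k)).
  assert (Ht : forall n, is_lub (fun v => exists k, (n <= k)%nat /\ v = a k) (t n)).
  { intros n. destruct (completeness (fun v => exists k, (n <= k)%nat /\ v = a k)) as [m Hm].
    - exists B. intros v [k [_ ->]]. apply HB.
    - exists (a n). exists n. auto.
    - unfold t. rewrite (Rsup_spec _ m Hm). auto. }
  set (T := fun r => exists n, r = t n).
  destruct (completeness (fun v => T (- v))) as [m' Hm'].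
  { exists B. intros v [n Hn]. assert (a n <= t n) by (apply (proj1 (Ht n)); exists n; auto).
    specialize (HB n). lra. }
  { exists (- t 0%nat). exists 0%nat. lra. }
  assert (Hg : is_glb T (- m')).
  { split.
    - intros x Hx. assert (- x <= m'); [|lra]. apply (proj1 Hm'). red. rewrite Ropp_involutive. auto.
    - intros b Hb. assert (m' <= - b); [|lra]. apply (proj2 Hm'). intros v Hv. specialize (Hb _ Hv). lra. }
  assert (HL : limsup a = - m') by (unfold limsup; apply Rinf_spec; exact Hg).
  rewrite HL. split.
  - intros eps He. assert (exists n, t n < - m' + eps).
    { apply NNPP. intros Hn. assert (- m' + eps <= - m'); [|lra]. apply (proj2 Hg). intros x [n ->].
      apply Rnot_lt_le. intros Hl. apply Hn. exists n. auto. }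
    destruct H as [N HN]. exists N. intros n Hn. assert (a n <= t N) by (apply (proj1 (Ht N)); exists n; auto). lra.
  - intros eps He N. apply NNPP. intros Hn.
    assert (t N <= - m' - eps).
    { apply (proj2 (Ht N)). intros v [k [Hk ->]]. apply Rnot_lt_le. intros Hl. apply Hn. exists k. split; auto. lra. }
    assert (- m' <= t N) by (apply (proj1 Hg); exists N; auto). lra. Qed.

Lemma ln_le x y : 0 < x -> x <= y -> ln x <= ln y.
Proof. intros Hx Hxy. destruct (Req_dec x y) as [->|Hne]. lra. left. apply ln_increasing; lra. Qed.
Lemma exp_le a b : a <= b -> exp a <= exp b.
Proof. intros H. destruct (Req_dec a b) as [->|Hne]. lra. left. apply exp_increasing; lra. Qed.
Lemma exp_nat k t : exp (INR k * t) = exp t ^ k.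
Proof. induction k. simpl. rewrite Rmult_0_l, exp_0. auto. rewrite S_INR, Rmult_plus_distr_r, exp_plus, IHk, Rmult_1_l. simpl. apply Rmult_comm. Qed.
Lemma geom_le q n : 0 <= q < 1 -> psum (fun k => q ^ k) n <= 1 / (1 - q).
Proof. intros Hq. assert (psum (fun k => q ^ k) n * (1 - q) = 1 - q ^ n).
  { induction n; simpl; [lra|]. rewrite Rmult_plus_distr_r, IHn. ring. }
  assert (0 <= q ^ n) by (apply pow_le; lra).
  apply Rmult_le_reg_r with (1 - q); [lra|]. rewrite H. field_simplify; lra. Qed.
Lemma ln2_pos : 0 < ln 2.
Proof. pose proof ln_lt_2. lra. Qed.

Lemma small_tail C eps : 0 <= C -> 0 < eps -> exists N, (1 <= N)%nat /\ forall n, (N <= n)%nat -> C / INR n <= eps.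
Proof. intros HC He. destruct (archimed_cor1 (eps / (C + 1))) as [N [HN1 HN2]].
  { apply Rdiv_lt_0_compat; lra. }
  exists N. split; [lia|]. intros n Hn.
  assert (HNr : 1 <= INR N) by (apply (le_INR 1); lia).
  assert (Hnr : INR N <= INR n) by (apply le_INR; auto).
  unfold Rdiv. apply Rle_trans with (C * / INR N).
  - apply Rmult_le_compat_l; auto. apply Rinv_le_contravar; lra.
  - apply Rle_trans with (C * (eps / (C + 1))). apply Rmult_le_compat_l; lra.
    unfold Rdiv. rewrite <- Rmult_assoc. apply Rmult_le_reg_r with (C + 1); [lra|].
    rewrite Rmult_assoc, Rinv_l by lra. nra. Qed.

Section Main.
Variable d : nat.
Variable mu : list Z -> R.
Hypothesis Hmu : step_dist d mu.
Hypothesis Htr : transient d mu.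

Let G0 := green d mu (zero d).
Let u n := U d mu (V d n).
Let a n := log2 (u n) / INR n.
Let c0 := ln G0 / ln 2.

Lemma HG0 : 1 <= G0.
Proof. apply green0_ge1; auto. Qed.
Lemma Hu n : has_sum (V d n) (green d mu) (u n) /\ G0 <= u n /\ u n <= 2 ^ (S n * d) * G0.
Proof. apply U_props; auto. Qed.
Lemma u_pos n : 0 < u n.
Proof. pose proof HG0. pose proof (Hu n). lra. Qed.
Lemma c0_nonneg : 0 <= c0.
Proof. unfold c0. pose proof HG0. pose proof ln2_pos. unfold Rdiv. apply Rmult_le_pos; [|left; apply Rinv_0_lt_compat; auto].
  rewrite <- ln_1. apply ln_le; lra. Qed.

Lemma a_eq n : (1 <= n)%nat -> a n * (INR n * ln 2) = ln (u n).
Proof. intros Hn. assert (0 < INR n) by (apply (lt_INR 0); lia). pose proof ln2_pos.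
  unfold a, log2. field. lra. Qed.
Lemma a_0 : a 0 = 0.
Proof. unfold a. simpl. unfold Rdiv. rewrite Rinv_0. ring. Qed.
Lemma npos n : (1 <= n)%nat -> 0 < INR n * ln 2.
Proof. intros Hn. assert (0 < INR n) by (apply (lt_INR 0); lia). pose proof ln2_pos. nra. Qed.

Lemma a_nonneg n : (1 <= n)%nat -> 0 <= a n.
Proof. intros Hn. apply Rmult_le_reg_r with (INR n * ln 2). apply npos; auto. rewrite a_eq by auto.
  rewrite Rmult_0_l. rewrite <- ln_1. apply ln_le; [lra|]. pose proof HG0. pose proof (Hu n). lra. Qed.

Lemma a_le n beta : (1 <= n)%nat -> ln (u n) <= INR n * beta * ln 2 -> a n <= beta.
Proof. intros Hn H. apply Rmult_le_reg_r with (INR n * ln 2). apply npos; auto. rewrite a_eq by auto. lra. Qed.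
Lemma a_ge n beta : (1 <= n)%nat -> beta <= a n -> INR n * beta * ln 2 <= ln (u n).
Proof. intros Hn H. rewrite <- a_eq by auto. pose proof (npos n Hn). nra. Qed.

Lemma a_le_inv n beta : (1 <= n)%nat -> a n <= beta -> ln (u n) <= INR n * beta * ln 2.
Proof. intros Hn H. rewrite <- a_eq by auto. pose proof (npos n Hn). nra. Qed.

Lemma a_upper n : (1 <= n)%nat -> a n <= INR d + (INR d + c0) / INR n.
Proof. intros Hn. apply a_le; auto. assert (0 < INR n) by (apply (lt_INR 0); lia). pose proof ln2_pos.
  pose proof HG0. destruct (Hu n) as [_ [Hu1 Hu2]].
  apply Rle_trans with (ln (2 ^ (S n * d) * G0)). apply ln_le; auto. apply u_pos.
  rewrite ln_mult by (try apply pow_lt; lra). rewrite ln_pow by lra. rewrite mult_INR, S_INR.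
  unfold c0. right. field. lra. Qed.

Definition Bd := 2 * INR d + c0.
Lemma a_bound n : - Bd <= a n <= Bd.
Proof. unfold Bd. pose proof c0_nonneg. pose proof (pos_INR d). destruct n as [|n].
  - rewrite a_0. lra.
  - pose proof (a_nonneg (S n) ltac:(lia)). pose proof (a_upper (S n) ltac:(lia)).
    assert ((INR d + c0) / INR (S n) <= INR d + c0).
    { assert (1 <= INR (S n)) by (apply (le_INR 1); lia). unfold Rdiv.
      apply Rmult_le_reg_r with (INR (S n)); [lra|]. rewrite Rmult_assoc, Rinv_l by lra. nra. }
    lra. Qed.

Let L := limsup a.
Lemma L1 : forall eps, 0 < eps -> exists N, forall n, (N <= n)%nat -> a n <= L + eps.
Proof. apply (limsup_spec a Bd a_bound). Qed.
Lemma L2 : forall eps, 0 < eps -> forall N, exists n, (N <= n)%nat /\ L - eps <= a n.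
Proof. apply (limsup_spec a Bd a_bound). Qed.

Lemma L_nonneg : 0 <= L.
Proof. apply Rnot_lt_le. intros HL. destruct (L1 (- L / 2) ltac:(lra)) as [N HN].
  specialize (HN (Nat.max N 1) ltac:(lia)). pose proof (a_nonneg (Nat.max N 1) ltac:(lia)). lra. Qed.

Lemma L_le_d : L <= INR d.
Proof. apply Rnot_lt_le. intros HL. set (eps := (L - INR d) / 3).
  destruct (small_tail (INR d + c0) eps) as [N [HN1 HN2]].
  pose proof (pos_INR d); pose proof c0_nonneg; lra. unfold eps; lra.
  destruct (L2 eps ltac:(unfold eps; lra) N) as [n [Hn Ha]].
  pose proof (a_upper n ltac:(lia)). specialize (HN2 n Hn). unfold eps in *. lra. Qed.

Definition ind (j : nat) (x : list Z) : R := if excluded_middle_informative (V d j x) then 1 else 0.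

Lemma finsum_ind j (g : list Z -> R) l :
  finsum (fun x => ind j x * g x) l = finsum g (filter (fun x => if excluded_middle_informative (V d j x) then true else false) l).
Proof. induction l; simpl; auto. unfold ind at 1. destruct excluded_middle_informative; simpl; rewrite IHl; lra. Qed.

Lemma ind_sum_le j l : NoDup l -> finsum (fun x => ind j x * green d mu x) l <= u j.
Proof. intros Hn. rewrite finsum_ind. apply (has_sum_ub _ _ _ _ (proj1 (Hu j))). apply NoDup_filter; auto.
  intros x Hx. apply filter_In in Hx. destruct Hx as [_ Hx]. destruct excluded_middle_informative; auto; discriminate. Qed.

Lemma rpow_bound x k gam : 0 < gam -> pt d x -> x <> zero d -> V d k x -> (k = 0%nat \/ ~ V d (k - 1) x) ->
  Rpower (enorm x) (- gam) <= exp (gam * ln 2) * exp (- (INR k * (gam * ln 2))).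
Proof. intros Hg Hp Hz Hv Hk. pose proof (enorm_lower d k x Hp Hz Hv Hk). pose proof ln2_pos.
  assert (H2 : 0 < 2 ^ k / 2) by (unfold Rdiv; apply Rmult_lt_0_compat; [apply pow_lt; lra|lra]).
  unfold Rpower. rewrite <- exp_plus. apply exp_le.
  assert (ln (2 ^ k / 2) <= ln (enorm x)) by (apply ln_le; auto).
  unfold Rdiv in H1. rewrite ln_mult in H1 by (try apply pow_lt; lra). rewrite ln_pow in H1 by lra.
  rewrite ln_Rinv in H1 by lra. nra. Qed.

Lemma G1 gam : 0 < gam -> L < gam ->
  finite_sum (fun x => pt d x /\ x <> zero d) (fun x => green d mu x * Rpower (enorm x) (- gam)).
Proof. intros Hg HL. pose proof L_nonneg as HL0. pose proof ln2_pos as Hl2. pose proof HG0 as HG.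
  set (beta := (L + gam) / 2).
  destruct (L1 (beta - L) ltac:(unfold beta; lra)) as [N0 HN0].
  set (N1 := Nat.max N0 1).
  set (C := 2 ^ (N1 * d) * G0).
  assert (HC : 1 <= C). { unfold C. assert (1 <= 2 ^ (N1 * d)) by (apply pow_R1_Rle; lra). nra. }
  assert (Hue : forall n, u n <= C * exp (INR n * (beta * ln 2))).
  { intros n. assert (He : 1 <= exp (INR n * (beta * ln 2))).
    { rewrite <- exp_0. apply exp_le. pose proof (pos_INR n). unfold beta. apply Rmult_le_pos; auto. nra. }
    destruct (le_lt_dec N1 n) as [Hn|Hn].
    - assert (a n <= beta) by (specialize (HN0 n ltac:(lia)); unfold beta in *; lra).
      apply a_le_inv in H; [|lia]. rewrite <- (exp_ln (u n)) by apply u_pos.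
      apply Rle_trans with (exp (INR n * (beta * ln 2))). apply exp_le. lra.
      pose proof (exp_pos (INR n * (beta * ln 2))). nra.
    - destruct (Hu n) as [_ [_ Hb]]. apply Rle_trans with C.
      + apply Rle_trans with (2 ^ (S n * d) * G0); auto. unfold C. apply Rmult_le_compat_r; [lra|].
        apply Rle_pow; [lra|]. apply Nat.mul_le_mono_r. lia.
      + nra. }
  set (q := exp ((beta - gam) * ln 2)).
  assert (Hq : 0 <= q < 1). { unfold q. split. left; apply exp_pos. rewrite <- exp_0. apply exp_increasing.
    unfold beta. nra. }
  set (c := fun k : nat => exp (gam * ln 2) * exp (- (INR k * (gam * ln 2)))).
  assert (Hc : forall k, 0 < c k) by (intros; unfold c; apply Rmult_lt_0_compat; apply exp_pos).
  assert (Hcu : forall k, c k * u k <= exp (gam * ln 2) * C * q ^ k).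
  { intros k. unfold c, q. rewrite <- exp_nat. specialize (Hue k).
    assert (exp (- (INR k * (gam * ln 2))) * exp (INR k * (beta * ln 2)) = exp (INR k * ((beta - gam) * ln 2))).
    { rewrite <- exp_plus. f_equal. ring. }
    pose proof (exp_pos (gam * ln 2)). pose proof (exp_pos (- (INR k * (gam * ln 2)))).
    rewrite <- H. replace (exp (gam * ln 2) * C * (exp (- (INR k * (gam * ln 2))) * exp (INR k * (beta * ln 2)))) with ((exp (gam * ln 2) * exp (- (INR k * (gam * ln 2)))) * (C * exp (INR k * (beta * ln 2)))) by ring. apply Rmult_le_compat_l; auto. left; apply Rmult_lt_0_compat; auto. }
  destruct (has_sum_exists (fun x => pt d x /\ x <> zero d) (fun x => green d mu x * Rpower (enorm x) (- gam))
     (exp (gam * ln 2) * C * (1 / (1 - q)))) as [s [Hs _]]; [|exists s; auto].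
  intros l Hn Hl.
  destruct (list_V d l) as [N HN]. intros x Hx; apply Hl; auto.
  apply Rle_trans with (finsum (fun x => psum (fun j => c j * (ind j x * green d mu x)) (S N)) l).
  { apply finsum_le. intros x Hx. destruct (Hl x Hx) as [Hp Hz].
    destruct (V_least d N x (HN x Hx)) as [k [Hk1 [Hk2 Hk3]]].
    apply Rle_trans with (c k * (ind k x * green d mu x)).
    - unfold ind. destruct excluded_middle_informative; [|contradiction]. rewrite Rmult_1_l.
      pose proof (green_nonneg d mu Htr x Hp). pose proof (rpow_bound x k gam Hg Hp Hz Hk2 Hk3).
      unfold c. nra.
    - apply (psum_term (fun j => c j * (ind j x * green d mu x))); [|lia].
      intros j _. apply Rmult_le_pos; [left; auto|]. apply Rmult_le_pos.
      unfold ind; destruct excluded_middle_informative; lra. apply green_nonneg; auto. }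
  rewrite (finsum_swap_psum (fun j x => c j * (ind j x * green d mu x))).
  apply Rle_trans with (psum (fun j => exp (gam * ln 2) * C * q ^ j) (S N)).
  { apply psum_le. intros j _. rewrite finsum_scal. apply Rle_trans with (c j * u j); auto.
    apply Rmult_le_compat_l; [left; auto|]. apply ind_sum_le; auto. }
  rewrite psum_scal. apply Rmult_le_compat_l. pose proof (exp_pos (gam * ln 2)). nra. apply geom_le; auto. Qed.

Lemma enorm_pos x n : pt d x -> x <> zero d -> V d n x -> 0 < enorm x.
Proof. intros Hp Hz Hv. destruct (V_least d n x Hv) as [k [_ [Hk2 Hk3]]].
  pose proof (enorm_lower d k x Hp Hz Hk2 Hk3). assert (0 < 2 ^ k / 2).
  unfold Rdiv; apply Rmult_lt_0_compat; [apply pow_lt; lra|lra]. lra. Qed.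

Lemma G2 gam : 0 < gam -> gam < L ->
  ~ finite_sum (fun x => pt d x /\ x <> zero d) (fun x => green d mu x * Rpower (enorm x) (- gam)).
Proof. intros Hg HL [s Hs]. pose proof ln2_pos as Hl2. pose proof HG0 as HG.
  pose proof (has_sum_nonneg _ _ _ Hs) as Hs0.
  set (C2 := G0 + s * exp (gam * ln (INR d + 1))).
  assert (HC2 : 1 <= C2). { unfold C2. pose proof (exp_pos (gam * ln (INR d + 1))). nra. }
  assert (Hub : forall n, u n <= C2 * exp (INR n * (gam * ln 2))).
  { intros n. pose proof (pos_INR d) as Hd.
    assert (Hpn : 0 < 2 ^ n) by (apply pow_lt; lra).
    set (K := exp (gam * ln ((INR d + 1) * 2 ^ n))).
    assert (HK : K = exp (gam * ln (INR d + 1)) * exp (INR n * (gam * ln 2))).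
    { unfold K. rewrite <- exp_plus. f_equal. rewrite ln_mult by lra. rewrite ln_pow by lra. ring. }
    assert (He1 : 1 <= exp (INR n * (gam * ln 2))).
    { rewrite <- exp_0. apply exp_le. apply Rmult_le_pos; [apply pos_INR|nra]. }
    apply Rle_trans with (G0 + K * s).
    - apply (has_sum_le _ _ _ _ (proj1 (Hu n))). intros l Hn Hl.
      assert (Hrem : finsum (green d mu) l <= G0 + finsum (green d mu) (remove leq (zero d) l)).
      { destruct (in_dec leq (zero d) l) as [Hi|Hi].
        - rewrite (finsum_remove leq _ l (zero d) Hn Hi). unfold G0; lra.
        - rewrite notin_remove by auto. lra. }
      assert (Hl' : forall x, In x (remove leq (zero d) l) -> pt d x /\ x <> zero d /\ V d n x).
      { intros x Hx. apply in_remove in Hx. destruct Hx as [Hx1 Hx2]. pose proof (Hl x Hx1) as Hv.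
        split; [apply Hv|split; auto]. }
      assert (finsum (green d mu) (remove leq (zero d) l) <= K * s).
      { apply Rle_trans with (finsum (fun x => K * (green d mu x * Rpower (enorm x) (- gam))) (remove leq (zero d) l)).
        - apply finsum_le. intros x Hx. destruct (Hl' x Hx) as [Hp [Hz Hv]].
          pose proof (green_nonneg d mu Htr x Hp).
          assert (1 <= K * Rpower (enorm x) (- gam)).
          { unfold K, Rpower. rewrite <- exp_plus. apply Rle_trans with (exp 0); [rewrite exp_0; lra|]. apply exp_le.
            pose proof (enorm_pos x n Hp Hz Hv). pose proof (enorm_upper d n x Hv).
            assert (ln (enorm x) <= ln ((INR d + 1) * 2 ^ n)) by (apply ln_le; auto). nra. }
          nra.
        - rewrite finsum_scal. apply Rmult_le_compat_l. unfold K; left; apply exp_pos.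
          apply (has_sum_ub _ _ _ _ Hs). apply remove_NoDup; auto. intros x Hx; destruct (Hl' x Hx); tauto. }
      lra.
    - rewrite HK. unfold C2. pose proof (exp_pos (gam * ln (INR d + 1))). nra. }
  set (eps := (L - gam) / 2).
  destruct (small_tail (ln C2 / ln 2) (eps / 2)) as [N [HN1 HN2]].
  { unfold Rdiv. apply Rmult_le_pos; [|left; apply Rinv_0_lt_compat; auto]. rewrite <- ln_1. apply ln_le; lra. }
  { unfold eps; lra. }
  destruct (L2 eps ltac:(unfold eps; lra) N) as [n [Hn Ha]].
  assert (a n <= gam + (ln C2 / ln 2) / INR n).
  { apply a_le; [lia|]. assert (0 < INR n) by (apply (lt_INR 0); lia).
    apply Rle_trans with (ln (C2 * exp (INR n * (gam * ln 2)))).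
    apply ln_le; [apply u_pos|apply Hub].
    rewrite ln_mult by (try apply exp_pos; lra). rewrite ln_exp. right. field. lra. }
  specialize (HN2 n Hn). unfold eps in *. lra. Qed.

Lemma main_eq : gamma_c d mu = L.
Proof. pose proof L_nonneg. pose proof L_le_d. unfold gamma_c.
  destruct excluded_middle_informative as [[g Hg]|Hn].
  - assert (HLd : L < INR d).
    { destruct H0 as [H0|H0]; auto. exfalso. destruct Hg as [[Hg1 Hg2] Hg3]. apply (G2 g Hg1); auto. lra. }
    apply Rinf_spec. split.
    + intros x [[Hx1 Hx2] Hx3]. apply Rnot_lt_le. intros Hl. apply (G2 x Hx1 Hl Hx3).
    + intros b Hb. apply Rnot_lt_le. intros Hl. set (g' := Rmin ((L + b) / 2) ((L + INR d) / 2)).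
      assert (L < g' < b /\ g' < INR d). { pose proof (Rmin_l ((L + b) / 2) ((L + INR d) / 2)) as Q1. pose proof (Rmin_r ((L + b) / 2) ((L + INR d) / 2)) as Q2. assert (L < g') by (unfold g'; apply Rmin_glb_lt; lra). fold g' in Q1, Q2. lra. }
      assert (b <= g'). { apply Hb. split. split; lra. apply G1; lra. } lra.
  - destruct H0 as [H0|H0]; auto. exfalso. apply Hn. exists ((L + INR d) / 2). split. split; lra. apply G1; lra. Qed.
End Main.

Theorem proposition6p3 (d : nat) (mu : list Z -> R) :
  step_dist d mu -> transient d mu ->
  gamma_c d mu = limsup (fun n => log2 (U d mu (V d n)) / INR n).
Proof. intros Hmu Htr. apply (main_eq d mu Hmu Htr). Qed.
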